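(* Let there be two states and let $\mu\in(0,1)$. Suppose the updating rule respects the Blackwell order for $\mu$, and $\varphi=\varphi^{\mu}$ has a contractive error at some $x'\in(\mu,1]$ but produces no expansive error. Then there exists $x^*\in[\mu,x')$ such that $\varphi(x)=x^*$ for all $x\in[x^*,1)$; moreover $\varphi(x)=x$ for all $x\in[\mu,x^*]$ and $\varphi(1)\ge x^*$.
   Context: Two states $\Theta=\{0,1\}$; a belief is identified with the probability of state $1$, so the belief space is $\Delta=[0,1]$, and the prior $\mu\in(0,1)$. An experiment $\pi:\Theta\to\Delta(S)$ ($S$ finite) with prior $\mu$ induces the Bayesian distribution over posteriors $\rho_B$, a finitely supported distribution on $[0,1]$ with mean $\mu$ (every such distribution arises from some experiment). Blackwell order: $\pi\succeq\pi'$ iff $\rho_B'$ is a mean-preserving contraction of $\rho_B$. An updating rule is given, for each prior $\mu$, by a distortion function $\varphi^{\mu}:[0,1]\to[0,1]$: when the Bayesian posterior is $x$, the decision maker holds belief $\varphi^{\mu}(x)$. For a compact action set $A$, continuous $u:A\times\Theta\to\mathbb{R}$, and consistent choice $a^*:[0,1]\to A$ (i.e. $a^*(y)\in\arg\max_{a}\mathbb{E}_y u(a,\theta)$ for all $y$), let $W(x)=\mathbb{E}_x u(a^*(\varphi^{\mu}(x)),\theta)$. The rule respects the Blackwell order for $\mu$ if for all such $A,u,a^*$ and all $\pi\succeq\pi'$, $\mathbb{E}_{\rho_B}W\ge\mathbb{E}_{\rho_B'}W$. $\varphi$ has an expansive error at $x$ if $\varphi(x)$ is not on the closed segment between $x$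 and $\mu$, and a contractive error at $x$ if $\varphi(x)$ is on that segment and $\varphi(x)\ne x$. *)

(* Defs.v *)
From HB Require Import structures.
From mathcomp Require Import all_boot all_order all_algebra.
From mathcomp Require Import all_classical all_reals topology normedtype.
Set Implicit Arguments. Unset Strict Implicit. Unset Printing Implicit Defensive.
Import Order.TTheory GRing.Theory Num.Theory.
Import numFieldNormedType.Exports.
Local Open Scope ring_scope.

(* States: Theta = bool, [true] is state 1.  A belief y in [0,1] is the
   probability of state 1. *)

Definition EU {R : realType} {A : Type} (u : A * bool -> R) (y : R) (a : A) : R :=
  (1 - y) * u (a, false) + y * u (a, true).

(* A finitely supported distribution over posteriors with mean mu, given by
   n atoms with weights p i at points x i (duplicates / zero weights allowed). *)
Definition is_post_dist {R : realType} (mu : R) (n : nat)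
  (p : 'I_n -> R) (x : 'I_n -> R) : Prop :=
  (forall i, 0 <= p i) /\ (\sum_(i < n) p i = 1) /\
  (forall i, 0 <= x i <= 1) /\ (\sum_(i < n) p i * x i = mu).

(* (m,q,y) is a mean-preserving contraction of (n,p,x): there is a joint
   distribution J with marginals p and q such that, conditionally on the
   contracted value y j, the expected value of x equals y j. *)
Definition mp_contraction {R : realType} (n : nat) (p : 'I_n -> R) (x : 'I_n -> R)
  (m : nat) (q : 'I_m -> R) (y : 'I_m -> R) : Prop :=
  exists J : 'I_n -> 'I_m -> R,
    (forall i j, 0 <= J i j) /\
    (forall i, \sum_(j < m) J i j = p i) /\
    (forall j, \sum_(i < n) J i j = q j) /\
    (forall j, \sum_(i < n) J i j * x i = q j * y j).

Definition expect {R : realType} (n : nat) (p : 'I_n -> R) (x : 'I_n -> R)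
  (W : R -> R) : R := \sum_(i < n) p i * W (x i).

(* Experiments are represented by their Bayesian distributions
   over posteriors (every finitely supported distribution with mean mu
   arises from some experiment). *)
Definition respects_blackwell {R : realType} (mu : R) (phi : R -> R) : Prop :=
  forall (A : topologicalType) (u : A * bool -> R) (astar : R -> A),
    compact [set: A] -> continuous u ->
    (forall yb, 0 <= yb <= 1 -> forall a, EU u yb a <= EU u yb (astar yb)) ->
    let W := fun z => EU u z (astar (phi z)) in
    forall (n : nat) (p x : 'I_n -> R) (m : nat) (q y : 'I_m -> R),
      is_post_dist mu p x -> is_post_dist mu q y ->
      mp_contraction p x q y ->
      expect q y W <= expect p x W.

Definition on_segment {R : realType} (mu z v : R) : Prop :=
  Num.min z mu <= v <= Num.max z mu.

Definition expansive_error {R : realType} (mu : R) (phi : R -> R) (z : R) : Prop :=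
  ~ on_segment mu z (phi z).

Definition contractive_error {R : realType} (mu : R) (phi : R -> R) (z : R) : Prop :=
  on_segment mu z (phi z) /\ phi z <> z.

(* Main.v *)
Require Import Defs.
From mathcomp Require Import all_boot all_order all_algebra.
From mathcomp Require Import all_classical all_reals topology normedtype.
From mathcomp Require Import ring lra.
Import Order.TTheory GRing.Theory Num.Theory.
Import numFieldNormedType.Exports.
Local Open Scope ring_scope.

Lemma split3 {R : realType} (mu a y b z w : R) (W : R -> R) :
 (forall n (p x : 'I_n -> R) m (q yy : 'I_m -> R), is_post_dist mu p x -> is_post_dist mu q yy ->
     mp_contraction p x q yy -> expect q yy W <= expect p x W) ->
 0 <= a -> a < y -> y < b -> b <= 1 -> 0 <= z <= 1 -> 0 < w <= 1 -> w*y + (1-w)*z = mu ->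
 (b-a) * W y <= (b-y) * W a + (y-a) * W b.
Proof.
move=> BW a0 ay yb b1 /andP[z0 z1] /andP[w0 w1] Hmu.
have ba : 0 < b - a by lra.
set la := (b-y)/(b-a).
have la0 : 0 <= la by apply: divr_ge0; lra.
have la1 : la <= 1 by rewrite ler_pdivrMr //; lra.
have Hla : la * a + (1 - la) * b = y by rewrite /la; field; lra.
pose p := fun i : 'I_3 => nth 0 [:: w*la; w*(1-la); 1-w] i.
pose x := fun i : 'I_3 => nth 0 [:: a; b; z] i.
pose q := fun i : 'I_2 => nth 0 [:: w; 1-w] i.
pose yy := fun i : 'I_2 => nth 0 [:: y; z] i.
pose J := fun (i : 'I_3) (j : 'I_2) =>
  nth 0 (nth [::] [:: [:: w*la; 0]; [:: w*(1-la); 0]; [:: 0; 1-w]] i) j.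
have := BW 3%N p x 2%N q yy.
rewrite /expect /is_post_dist /mp_contraction !big_ord_recl !big_ord0 /=.
rewrite /p /x /q /yy /= /bump /=.
move=> H.
have {H} : w * W y + ((1-w) * W z + 0) <= w*la * W a + (w*(1-la) * W b + ((1-w) * W z + 0)).
  apply: H.
  - split; first by move=> [[|[|[|i]]] Hi] /=; rewrite ?nth_nil; try apply: mulr_ge0; lra.
    split; first by lra.
    split; first by move=> [[|[|[|i]]] Hi] /=; rewrite ?nth_nil; try (apply/andP; split); lra.
    rewrite -Hmu -Hla; ring.
  - split; first by move=> [[|[|i]] Hi] /=; rewrite ?nth_nil; try (apply/andP; split); lra.
    split; first by lra.
    split; first by move=> [[|[|i]] Hi] /=; rewrite ?nth_nil; try (apply/andP; split); lra.
    rewrite -Hmu; ring.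
  - exists J; rewrite /J; split.
      by move=> [[|[|[|i]]] Hi] [[|[|j]] Hj] /=; rewrite ?nth_nil; try apply: mulr_ge0; lra.
    split.
      by move=> [[|[|[|i]]] Hi]; rewrite !big_ord_recl !big_ord0 /= /bump /= ?nth_nil; ring.
    split.
      by move=> [[|[|j]] Hj]; rewrite !big_ord_recl !big_ord0 /= /bump /= ?nth_nil; ring.
    move=> [[|[|j]] Hj]; rewrite !big_ord_recl !big_ord0 /= /bump /= ?nth_nil; rewrite ?mulr0 ?mul0r; try ring.
    by rewrite -Hla; ring.
move=> H.
have H2 : W y <= la * W a + (1 - la) * W b.
  rewrite -(ler_pM2l w0); lra.
have E1 : b - y = (b-a) * la by rewrite /la; field; lra.
have E2 : y - a = (b-a) * (1 - la) by rewrite /la; field; lra.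
clearbody la; rewrite E1 E2 -!mulrA -mulrDr ler_pM2l //.
Qed.

Lemma bb_cont {R : realType} (f : bool * bool -> R) : continuous f.
Proof.
move=> [a b]; apply: (near_cst_continuous (f (a, b))).
exists ([set a]%classic, [set b]%classic); first by split; exact: discrete_set1.
by move=> [c d] [/= -> ->].
Qed.

Definition Wt {R : realType} (phi : R -> R) (t z : R) : R :=
  if t < phi z then z - t else 0.

Lemma thr {R : realType} {mu : R} {phi : R -> R} (t : R) {a y b : R} :
  0 < mu < 1 -> respects_blackwell mu phi ->
  0 <= a -> a < y -> y < b -> b <= 1 ->
  (b-a) * Wt phi t y <= (b-y) * Wt phi t a + (y-a) * Wt phi t b.
Proof.
move=> /andP[m0 m1] BW a0 ay yb b1.
pose u := fun ab : bool * bool => if ab.1 then (if ab.2 then 1 - t else - t) else (0:R).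
have E1 : forall z, EU u z true = z - t by move=> z; rewrite /EU /u /=; ring.
have E0 : forall z, EU u z false = 0 by move=> z; rewrite /EU /u /=; ring.
have cons : forall yb, 0 <= yb <= 1 -> forall a, EU u yb a <= EU u yb (t < yb).
  move=> z _ [|]; case: ltP => h; rewrite ?E1 ?E0; lra.
have BW' := BW bool u (fun z => t < z) bool_compact (bb_cont u) cons.
have BW2 : forall n (p x : 'I_n -> R) m (q yy : 'I_m -> R), is_post_dist mu p x ->
    is_post_dist mu q yy -> mp_contraction p x q yy ->
    expect q yy (fun z => EU u z (t < phi z)) <= expect p x (fun z => EU u z (t < phi z)) := BW'.
have HW : forall z, EU u z (t < phi z) = Wt phi t z.
  by move=> z; rewrite /Wt; case: (t < phi z); rewrite ?E1 ?E0.
have key : forall z w, 0 <= z <= 1 -> 0 < w <= 1 -> w*y + (1-w)*z = mu ->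
    (b-a) * Wt phi t y <= (b-y) * Wt phi t a + (y-a) * Wt phi t b.
  move=> z w hz hw he.
  have := @split3 R mu a y b z w _ BW2 a0 ay yb b1 hz hw he.
  by rewrite !HW.
case: (leP mu y) => hy.
- have y0 : 0 < y by lra.
  apply: (key 0 (mu / y)).
  + lra.
  + apply/andP; split; first exact: divr_gt0.
    by rewrite ler_pdivrMr // mul1r.
  + field; lra.
- have y1 : 0 < 1 - y by lra.
  apply: (key 1 ((1 - mu) / (1 - y))).
  + lra.
  + apply/andP; split; first by apply: divr_gt0; lra.
    rewrite ler_pdivrMr // mul1r; lra.
  + field; lra.
Qed.

Lemma Up {R : realType} {mu : R} {phi : R -> R} {t b c : R} :
  0 < mu < 1 -> respects_blackwell mu phi ->
  0 <= t -> t < b -> b < c -> c <= 1 -> t < phi b -> t < phi c.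
Proof.
move=> hm BW t0 tb bc c1 hb.
have := thr t hm BW t0 tb bc c1.
rewrite /Wt hb.
have -> : (if t < phi t then t - t else 0) = 0 by case: ifP => _; rewrite ?subrr.
case: ltP => // hc.
rewrite !mulr0 addr0 => H.
have : 0 < (c - t) * (b - t) by apply: mulr_gt0; lra.
lra.
Qed.

Lemma Down {R : realType} {mu : R} {phi : R -> R} {t c y : R} :
  0 < mu < 1 -> respects_blackwell mu phi ->
  0 <= t -> t < c -> c < y -> y < 1 -> phi c <= t -> phi y <= t.
Proof.
move=> hm BW t0 tc cy y1 hc.
have c0 : 0 <= c by lra.
have := thr t hm BW c0 cy y1 (lexx 1).
rewrite /Wt; case: (ltP t (phi c)) => hc'; first lra.
rewrite mulr0 add0r.
case: (ltP t (phi y)) => hy //.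
have W1 : (if t < phi 1 then 1 - t else 0) <= 1 - t by case: ifP => _; lra.
move: W1; set w1 := (if _ then _ else _) => W1 H.
have : (y - c) * w1 <= (y - c) * (1 - t) by rewrite ler_pM2l; lra.
have : 0 < (1 - y) * (c - t) by apply: mulr_gt0; lra.
nra.
Qed.

Lemma seg_hi {R : realType} {mu z v : R} : mu <= z -> on_segment mu z v -> mu <= v /\ v <= z.
Proof.
by move=> h; rewrite /on_segment min_r // max_l // => /andP[].
Qed.

Lemma core {R : realType} {mu : R} {phi : R -> R} {x0 : R} :
  0 < mu < 1 ->
  (forall z, 0 <= z <= 1 -> 0 <= phi z <= 1) ->
  respects_blackwell mu phi ->
  mu < x0 -> x0 < 1 -> phi x0 < x0 ->
  (forall z, 0 <= z <= 1 -> ~ expansive_error mu phi z) ->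
  [/\ mu <= phi x0, phi x0 < x0,
      (forall z, phi x0 <= z < 1 -> phi z = phi x0),
      (forall z, mu <= z <= phi x0 -> phi z = z) & phi x0 <= phi 1].
Proof.
move=> hm H01 BW mx x1 px Hne.
have hm' := hm; move/andP: hm' => [m0 m1].
have seg : forall z, mu <= z -> z <= 1 -> mu <= phi z /\ phi z <= z.
  move=> z mz z1; apply: seg_hi => //.
  have := Hne z; rewrite /expansive_error => H.
  apply: contrapT; apply: H; apply/andP; split; lra.
have [mv _] := seg x0 (ltW mx) (ltW x1).
set v := phi x0 in mv px *.
have v0 : 0 <= v by lra.
have hA : forall y, v < y -> y < 1 -> phi y <= v.
  move=> y vy y1.
  case: (ltgtP y x0) => hy.
  - case: (leP (phi y) v) => // h.
    have := Up hm BW v0 vy hy (ltW x1) h; rewrite -/v; lra.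
  - exact: (Down hm BW v0 px hy y1 (lexx _)).
  - by rewrite hy.
have hB : forall t y, 0 <= t -> t < v -> t < y -> y < 1 -> t < phi y.
  move=> t y t0 tv ty y1.
  case: (ltgtP y x0) => hy.
  - case: (ltP t (phi y)) => // h.
    have := Down hm BW t0 ty hy x1 h; rewrite -/v; lra.
  - have tx : t < x0 by lra.
    exact: (Up hm BW t0 tx hy (ltW y1)).
  - by rewrite hy.
have hD : forall y, mu <= y -> y <= v -> phi y = y.
  move=> y my yv.
  have [s1 s2] := seg y my (ltac:(lra)).
  case: (ltP (phi y) y) => h; last lra.
  have := hB (phi y) y (ltac:(lra)) (ltac:(lra)) h (ltac:(lra)); lra.
split => //.
- move=> z /andP[vz z1].
  case: (ltP v z) => h; last first.
    have -> : z = v by lra.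
    by apply: hD; lra.
  have a1 := hA z h z1.
  have [s1 s2] := seg z (ltac:(lra)) (ltac:(lra)).
  case: (ltP (phi z) v) => h2; last lra.
  have := hB (phi z) z (ltac:(lra)) h2 (ltac:(lra)) z1; lra.
- by move=> z /andP[]; apply: hD.
- have [s1 s2] := seg 1 (ltac:(lra)) (lexx 1).
  case: (ltP (phi 1) v) => h; last lra.
  have := Up hm BW (ltac:(lra) : 0 <= phi 1) (ltac:(lra) : phi 1 < x0) x1 (lexx 1) h; lra.
Qed.

Theorem lemma6 (R : realType) (mu : R) (phi : R -> R) (x' : R) :
  0 < mu < 1 ->
  (forall z, 0 <= z <= 1 -> 0 <= phi z <= 1) ->
  respects_blackwell mu phi ->
  mu < x' <= 1 ->
  contractive_error mu phi x' ->
  (forall z, 0 <= z <= 1 -> ~ expansive_error mu phi z) ->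
  exists xs : R,
    [/\ mu <= xs < x',
        (forall z, xs <= z < 1 -> phi z = xs),
        (forall z, mu <= z <= xs -> phi z = z) &
        xs <= phi 1].
Proof.
move=> hm H01 BW /andP[mx x1] [segx nex] Hne.
have hm' := hm; move/andP: hm' => [m0 m1].
have seg : forall z, mu <= z -> z <= 1 -> mu <= phi z /\ phi z <= z.
  move=> z mz z1; apply: seg_hi => //.
  have := Hne z; rewrite /expansive_error => H.
  apply: contrapT; apply: H; apply/andP; split; lra.
have fin : forall x0, mu < x0 -> x0 < 1 -> phi x0 < x0 -> x0 <= x' -> exists xs : R,
    [/\ mu <= xs < x', (forall z, xs <= z < 1 -> phi z = xs),
        (forall z, mu <= z <= xs -> phi z = z) & xs <= phi 1].
  move=> x0 m0' x01 p0 x0x.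
  have [a b c d e] := core hm H01 BW m0' x01 p0 Hne.
  exists (phi x0); split => //; apply/andP; split => //; lra.
case: (ltP x' 1) => hx.
  have [s1 s2] := seg x' (ltW mx) x1.
  apply: (fin x') => //.
  by rewrite lt_neqAle s2 andbT; apply/eqP.
have x'1 : x' = 1 by lra.
case: (pselect (exists z, mu < z < 1 /\ phi z <> z)) => [[z [/andP[mz z1] pz]]|nz].
  have [s1 s2] := seg z (ltW mz) (ltW z1).
  apply: (fin z) => //; last lra.
  by rewrite lt_neqAle s2 andbT; apply/eqP.
exfalso.
have id1 : forall z, mu < z -> z < 1 -> phi z = z.
  move=> z mz z1; apply: contrapT => hz; apply: nz; exists z; split => //; apply/andP; split => //.
have [s1 s2] := seg 1 (ltac:(lra)) (lexx 1).
have p1 : phi 1 < 1 by rewrite lt_neqAle s2 andbT; apply/eqP; rewrite -x'1.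
set t := (phi 1 + 1) / 2.
set b := (t + 1) / 2.
have ht : phi 1 < t < 1 by rewrite /t; apply/andP; split; lra.
move/andP: ht => [ht1 ht2].
have hb : t < b < 1 by rewrite /b; apply/andP; split; lra.
move/andP: hb => [hb1 hb2].
have pb : phi b = b by apply: id1; lra.
have := Up hm BW (ltac:(lra) : 0 <= t) hb1 hb2 (lexx 1) (ltac:(rewrite pb; lra)).
lra.
Qed.
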